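(* Under the assumptions on $\Psi$ stated in the context, let $T\in(0,\infty]$, let $g^{in}\in L^1_{-2\beta,1}(0,\infty)$ be non-negative, let $g$ be a weak solution on $[0,T)$, and let $t\in(0,T)$. Then (i) $\lim_{q\to\infty}\int_0^t\int_0^q\int_q^\infty\zeta\Psi(\zeta,\eta)g(\zeta,s)g(\eta,s)d\eta d\zeta ds=0$, and (ii) $\lim_{q\to\infty}q\int_0^t\int_q^\infty\int_q^\infty\Psi(\zeta,\eta)g(\zeta,s)g(\eta,s)d\eta d\zeta ds=0$.
   Context: $\Psi:(0,\infty)^2\to[0,\infty)$ is measurable and symmetric and there are $\beta>0$, $k>0$ with $\Psi(\zeta,\eta)\le k(\zeta\eta)^{-\beta}$ on $(0,1)^2$, $\Psi(\zeta,\eta)\le k\eta\zeta^{-\beta}$ on $(0,1)\times(1,\infty)$, and $\Psi(\zeta,\eta)\le k(\zeta+\eta)$ on $(1,\infty)^2$. $L^1_{-2\beta,1}(0,\infty):=L^1((0,\infty);(\zeta^{-2\beta}+\zeta)d\zeta)$. A weak solution on $[0,T)$ is a non-negative $g\in\mathcal{C}([0,T);L^1(0,\infty))\cap L^\infty(0,T;L^1_{-2\beta,1}(0,\infty))$ such that for every $t\in(0,T)$ and $\omega\in L^\infty(0,\infty)$, $\int_0^\infty[g(\zeta,t)-g^{in}(\zeta)]\omega(\zeta)d\zeta=\frac12\int_0^t\int_0^\infty\int_0^\infty[\omega(\zeta+\eta)-\omega(\zeta)-\omega(\eta)]\Psi(\zeta,\eta)g(\zeta,s)g(\eta,s)d\eta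 d\zeta ds$. *)

(* Defs.v *)
From HB Require Import structures.
From mathcomp Require Import all_boot all_order all_algebra.
From mathcomp Require Import all_classical all_reals all_analysis.
Set Implicit Arguments. Unset Strict Implicit. Unset Printing Implicit Defensive.
Import Order.TTheory GRing.Theory Num.Theory.
Import numFieldNormedType.Exports.
Local Open Scope classical_set_scope.
Local Open Scope ring_scope.

Section Defs.
Variable R : realType.
Local Notation mu := (@lebesgue_measure R).

Definition Rpos : set R := `]0%R, +oo[.

Definition tint (T : \bar R) : set R := [set s | 0 <= s /\ (s%:E < T)%E].

Definition kernel_hyp (Psi : R -> R -> R) (beta k : R) : Prop :=
  0 < beta /\ 0 < k /\
  measurable_fun (Rpos `*` Rpos) (fun p : R * R => Psi p.1 p.2) /\
  (forall x y, 0 < x -> 0 < y -> 0 <= Psi x y) /\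
  (forall x y, 0 < x -> 0 < y -> Psi x y = Psi y x) /\
  (forall x y, 0 < x < 1 -> 0 < y < 1 -> Psi x y <= k * (x * y) `^ (- beta)) /\
  (forall x y, 0 < x < 1 -> 1 < y -> Psi x y <= k * y * x `^ (- beta)) /\
  (forall x y, 1 < x -> 1 < y -> Psi x y <= k * (x + y)).

Definition wgt (beta x : R) : R := x `^ (- (2 * beta)) + x.

Definition L1w (beta : R) (f : R -> R) : Prop :=
  measurable_fun Rpos f /\
  (\int[mu]_(x in Rpos) (wgt beta x * `|f x|)%:E < +oo)%E.

(* Weak solution on [0,T) with initial datum gin; g x s = g(x,s). *)
Definition weak_solution (Psi : R -> R -> R) (beta : R) (T : \bar R)
    (gin : R -> R) (g : R -> R -> R) : Prop :=
   (forall x s, 0 < x -> tint T s -> 0 <= g x s) /\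
   measurable_fun (Rpos `*` tint T) (fun p : R * R => g p.1 p.2) /\
   (* g in C([0,T); L^1(0,oo)) *)
   (forall s, tint T s -> mu.-integrable Rpos (fun x => (g x s)%:E)) /\
   (forall s, tint T s -> forall eps : R, 0 < eps -> exists2 delta : R, 0 < delta &
      forall r, tint T r -> `|r - s| < delta ->
        (\int[mu]_(x in Rpos) (`|g x r - g x s|)%:E < eps%:E)%E) /\
   (* g in L^oo(0,T; L^1_{-2beta,1}(0,oo)) *)
   (exists M : R, {ae mu, forall s, 0 < s -> (s%:E < T)%E ->
      (\int[mu]_(x in Rpos) (wgt beta x * g x s)%:E <= M%:E)%E}) /\
   (forall t, 0 < t -> (t%:E < T)%E ->
    forall w : R -> R, measurable_fun Rpos w ->
      (exists C : R, forall x, 0 < x -> `|w x| <= C) ->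
      (\int[mu]_(x in Rpos) ((g x t - gin x) * w x)%:E =
       (2^-1)%:E *
       \int[mu]_(s in `[0%R, t]) \int[mu]_(x in Rpos) \int[mu]_(y in Rpos)
          ((w (x + y) - w x - w y) * Psi x y * g x s * g y s)%:E)%E).

End Defs.

(* Main.v *)
Require Import Defs.
From HB Require Import structures.
From mathcomp Require Import all_boot all_order all_algebra.
From mathcomp Require Import all_classical all_reals all_analysis.
From mathcomp Require Import measurable_realfun.
From mathcomp Require Import ring lra.
Import Order.TTheory GRing.Theory Num.Theory.
Import numFieldNormedType.Exports.
Local Open Scope classical_set_scope.
Local Open Scope ring_scope.
Local Open Scope ereal_scope.
Lemma le_integral_nm d (T : measurableType d) (R : realType)
  (mu : {measure set T -> \bar R}) (D : set T) (f1 f2 : T -> \bar R) :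
  (forall x, D x -> 0 <= f1 x) -> (forall x, D x -> f1 x <= f2 x) ->
  \int[mu]_(x in D) f1 x <= \int[mu]_(x in D) f2 x.
Proof.
move=> f10 f12.
have e1 : (f1 \_ D)^\- = cst 0.
  apply/funext => x; rewrite funenegE /patch; case: ifPn => [/set_mem Dx|_].
    by apply/max_r; rewrite leeNl oppe0 f10.
  by rewrite oppe0 maxxx.
have e2 : (f2 \_ D)^\- = cst 0.
  apply/funext => x; rewrite funenegE /patch; case: ifPn => [/set_mem Dx|_].
    by apply/max_r; rewrite leeNl oppe0 (le_trans (f10 _ Dx) (f12 _ Dx)).
  by rewrite oppe0 maxxx.
rewrite /integral e1 e2 leeB//.
apply: le_ereal_sup => _ [h /= hf <-]; exists h => //= x.
apply: (le_trans (hf x)); rewrite !funeposE /patch; case: ifPn => [/set_mem Dx|_]//.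
by rewrite ge_max !le_max lexx orbT (le_trans (f12 _ Dx)) ?le_max ?lexx.
Qed.
Local Close Scope ereal_scope.
Section S.
Variable R : realType.
Local Notation mu := (@lebesgue_measure R).
Variables (Psi : R -> R -> R) (beta k : R) (T : \bar R) (gin : R -> R) (g : R -> R -> R) (t : R).
Hypothesis hK : kernel_hyp Psi beta k.
Hypothesis hW : weak_solution Psi beta T gin g.
Hypothesis t0 : 0 < t.
Hypothesis tT : (t%:E < T)%E.

Lemma Rpos_E (x : R) : Rpos x = (0 < x).
Proof. by rewrite /Rpos /= in_itv /= andbT. Qed.

Lemma it_tint {s} : `[0, t]%classic s -> tint T s.
Proof.
rewrite /= in_itv /= => /andP[s0 st]; split => //.
by rewrite (le_lt_trans _ tT)// lee_fin.
Qed.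

Lemma g0 x s : 0 < x -> `[0, t]%classic s -> 0 <= g x s.
Proof. by move=> x0 /it_tint; case: hW => + _; apply. Qed.

Lemma wgt_ge0 x : 0 <= wgt beta x.
Proof. Abort.

Lemma wgtx {x} : 0 < x -> x <= wgt beta x.
Proof. by move=> x0; rewrite /wgt lerDr powR_ge0. Qed.

Lemma wgt0 {x} : 0 < x -> 0 <= wgt beta x.
Proof. by move=> x0; apply: le_trans (ltW x0) (wgtx x0 : x <= wgt beta x). Qed.

Lemma mwgt : measurable_fun setT (wgt beta).
Proof. by apply: measurable_funD => //; exact: measurable_powR. Qed.

Lemma mgs s : `[0, t]%classic s -> measurable_fun (@Rpos R) (fun x => g x s).
Proof.
move=> /it_tint st; case: hW => _ [_ [+ _]] => /(_ s st) /integrableP[+ _].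
by move/measurable_EFinP.
Qed.

Lemma mwg {s} : `[0, t]%classic s -> measurable_fun (@Rpos R) (fun x => wgt beta x * g x s).
Proof. by move=> st; apply: measurable_funM; [exact: measurable_funTS mwgt|exact: mgs]. Qed.


Definition tau (q s : R) : \bar R :=
  \int[mu]_(x in @Rpos R) (wgt beta x * g x s * \1_(`]q, +oo[) x)%:E.
Definition A (s : R) : \bar R := \int[mu]_(x in @Rpos R) (wgt beta x * g x s)%:E.
Definition J (q : R) : \bar R := \int[mu]_(s in `[0, t]) (A s * tau q s)%E.

Lemma tau_ge0 q {s} : `[0, t]%classic s -> (0 <= tau q s)%E.
Proof.
move=> st; apply: integral_ge0 => x; rewrite Rpos_E => x0.
by rewrite lee_fin !mulr_ge0 ?wgt0 ?g0.
Qed.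

Lemma A_ge0 {s} : `[0, t]%classic s -> (0 <= A s)%E.
Proof.
move=> st; apply: integral_ge0 => x; rewrite Rpos_E => x0.
by rewrite lee_fin !mulr_ge0 ?wgt0 ?g0.
Qed.

Lemma tau_le_A q {s} : `[0, t]%classic s -> (tau q s <= A s)%E.
Proof.
move=> st; apply: le_integral_nm => x; rewrite Rpos_E => x0.
  by rewrite lee_fin !mulr_ge0 ?wgt0 ?g0.
by rewrite lee_fin ler_piMr ?mulr_ge0 ?wgt0 ?g0// indicE; case: (_ \in _).
Qed.

Lemma tau0 s : tau 0 s = A s.
Proof.
apply: eq_integral => x; rewrite inE Rpos_E => x0.
by rewrite indicE mem_set ?mulr1//= in_itv/= x0.
Qed.

Lemma tau_Ioo q s : 0 <= q ->
  (\int[mu]_(x in `]q, +oo[) (wgt beta x * g x s)%:E)%E = tau q s.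
Proof.
move=> q0; rewrite /tau [LHS]integral_mkcond [RHS]integral_mkcond.
apply: eq_integral => x _; rewrite /patch indicE.
case: ifPn => [/set_mem qx|/negP qx].
  have x0 : 0 < x by move: qx; rewrite /= in_itv /= andbT; exact: le_lt_trans.
  by rewrite ifT ?mulr1 ?inE ?Rpos_E.
by case: ifPn => // _; rewrite mulr0.
Qed.


Lemma mtint : measurable (tint T).
Proof.
case: T => [r| |].
- rewrite (_ : tint _ = `[0, r[%classic); first exact: measurable_itv.
  apply/seteqP; split => s; rewrite /tint /= in_itv /= ?lte_fin.
    by case=> -> ->.
  by case/andP => -> ->.
- rewrite (_ : tint _ = `[0, +oo[%classic); first exact: measurable_itv.
  apply/seteqP; split => s; rewrite /tint /= in_itv /= andbT ?ltry.
    by case.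
  by move=> ->.
- rewrite (_ : tint _ = set0) //.
  by apply/seteqP; split => s //; rewrite /tint /= => -[_]; rewrite ltNge leNye.
Qed.

Lemma mRpos : measurable (@Rpos R).
Proof. exact: measurable_itv. Qed.

Lemma mgsw : measurable_fun (`[0, t]%classic `*` @Rpos R) (fun p : R * R => g p.2 p.1).
Proof.
have -> : (fun p : R * R => g p.2 p.1) = (fun p : R * R => g p.1 p.2) \o unstable.swap by [].
apply: (measurable_comp (F := @Rpos R `*` tint T)).
- exact: measurableX mRpos mtint.
- by move=> _ [[s x] [/= st xp] <-]; split => //=; exact: it_tint.
- by case: hW => _ [].
- apply: measurable_funTS.
  exact: measurable_swap.
Qed.

Definition hq (q : R) := fun p : R * R => wgt beta p.2 * g p.2 p.1 * \1_(`]q, +oo[) p.2.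

Lemma mhq q : measurable_fun setT (fun p : R * R => ((hq q) \_ (`[0, t]%classic `*` @Rpos R) p)%:E).
Proof.
apply/measurable_EFinP; apply/(measurable_restrictT _ _).1.
  exact: measurableX mRpos.
apply: measurable_funM; first apply: measurable_funM.
- exact/measurable_funTS/(measurableT_comp mwgt).
- exact: mgsw.
- apply/measurable_funTS/measurableT_comp => //; exact: measurable_indic.
Qed.

Lemma mtau q : measurable_fun `[0, t]%classic (tau q).
Proof.
have f0 : forall p : R * R, (0 <= ((hq q) \_ (`[0, t]%classic `*` @Rpos R) p)%:E)%E.
  move=> [s x]; rewrite /patch; case: ifPn => // /set_mem [/= st].
  by rewrite Rpos_E => x0; rewrite lee_fin /hq /= !mulr_ge0 ?wgt0 ?g0.
have := measurable_fun_fubini_tonelli_F (m2 := mu) _ (mhq q) f0.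
move=> /(measurable_funTS (D := `[0, t]%classic)); apply: eq_measurable_fun.
move=> s /set_mem st; rewrite /fubini_F /tau [RHS]integral_mkcond.
apply: eq_integral => x _; rewrite /patch /=.
case: ifPn => [/set_mem xp|/negP xp].
  by case: xp => _ /= xR; rewrite (mem_set xR).
rewrite ifF //; apply/negP => /set_mem xR; apply: xp; apply/mem_set; split => //.
Qed.


Lemma mA : measurable_fun `[0, t]%classic A.
Proof.
by have := mtau 0; apply: eq_measurable_fun => s _; rewrite tau0.
Qed.

Lemma mAtau q : measurable_fun `[0, t]%classic (fun s => (A s * tau q s)%E).
Proof. exact: emeasurable_funM mA (mtau q). Qed.

Lemma tau_cvg {s} (u : R^nat) : `[0, t]%classic s -> (A s < +oo)%E ->
  u n @[n --> \oo] --> +oo -> tau (u n) s @[n --> \oo] --> 0%E.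
Proof.
move=> st Aoo uoo.
pose fn n x := (wgt beta x * g x s * \1_(`]u n, +oo[) x)%:E.
have mfn n : measurable_fun (@Rpos R) (fn n).
  apply/measurable_EFinP; apply: measurable_funM; first exact: mwg.
  exact: measurable_indic.
have ff : {ae mu, forall x, @Rpos R x -> fn ^~ x @ \oo --> 0%E}.
  apply: aeW => x _; apply: cvg_near_cst.
  move/cvgryPge: uoo => /(_ x); apply: filterS => n xu.
  rewrite /fn indicE memNset ?mulr0//= in_itv /= andbT.
  by apply/negP; rewrite -leNgt.
have ig : mu.-integrable (@Rpos R) (fun x => (wgt beta x * g x s)%:E).
  apply/integrableP; split.
    by apply/measurable_EFinP; exact: mwg.
  suff -> : (\int[mu]_(x in @Rpos R) `|(wgt beta x * g x s)%:E|)%E = A s by [].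
  apply: eq_integral => x /set_mem; rewrite Rpos_E => x0.
  by rewrite gee0_abs// lee_fin mulr_ge0 ?wgt0 ?g0.
have fg : {ae mu, forall x n, @Rpos R x -> (`|fn n x| <= (wgt beta x * g x s)%:E)%E}.
  apply: aeW => x n; rewrite Rpos_E => x0.
  have h0 : 0 <= wgt beta x * g x s by rewrite mulr_ge0 ?wgt0 ?g0.
  have i0 : 0 <= \1_(`]u n, +oo[) x :> R by rewrite indicE; case: (_ \in _).
  have i1 : \1_(`]u n, +oo[) x <= 1 :> R by rewrite indicE; case: (_ \in _).
  rewrite /fn gee0_abs ?lee_fin; last by rewrite mulr_ge0.
  by rewrite ler_piMr.
have [_ _] := @dominated_convergence _ _ _ mu (@Rpos R) mRpos fn (fun=> 0%E) _ mfn (measurable_cst _) ff ig fg.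
by rewrite integral0.
Qed.


Lemma ae_neq (a : R) : {ae mu, forall s : R, s != a}.
Proof.
exists [set a]; split.
- exact: measurable_set1.
- exact: lebesgue_measure_set1.
- by move=> s /= /negP; rewrite negbK => /eqP.
Qed.

Lemma ae_good : exists M : R, {ae mu, forall s, `[0, t]%classic s -> (A s <= M%:E)%E}.
Proof.
case: hW => _ [_ [_ [_ [[M hM] _]]]]; exists M.
apply: (filterS2 (F := almost_everywhere mu) _ _ hM (ae_neq 0)) => s H sn0 st; apply: H.
  by move: st; rewrite /= in_itv /= => /andP[s0 _]; rewrite lt_neqAle eq_sym sn0.
by case: (it_tint st).
Qed.

Lemma J_cvg : J q @[q --> +oo] --> 0%E.
Proof.
apply/cvge_pinftyP => u uoo.
have [M hM] := ae_good.
have mD : measurable (`[0, t]%classic : set R) by exact: measurable_itv.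
pose fn n s := (A s * tau (u n) s)%E.
have mfn n : measurable_fun `[0, t]%classic (fn n) by exact: mAtau.
have ff : {ae mu, forall s, `[0, t]%classic s -> fn ^~ s @ \oo --> 0%E}.
  move: hM; apply: (filterS (F := almost_everywhere mu)) => s H st.
  have As0 := A_ge0 st.
  have Afin : A s \is a fin_num.
    by rewrite ge0_fin_numE// (le_lt_trans (H st)) ?ltry.
  have := cvgeZl Afin (tau_cvg u st _ uoo).
  rewrite mule0; apply.
  by rewrite (le_lt_trans (H st)) ?ltry.
have ig : mu.-integrable `[0, t]%classic (fun=> (M * M)%:E).
  apply/integrableP; split; first exact: measurable_cst.
  rewrite integral_cst//.
  have H : (mu (`[0%R, t]%classic : set R) < +oo)%E.
    by rewrite lebesgue_measure_itv/= lte_fin t0 -EFinD ltry.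
  by apply: lte_mul_pinfty => //; exact: H.
have fg : {ae mu, forall s n, `[0, t]%classic s -> (`|fn n s| <= (M * M)%:E)%E}.
  move: hM; apply: (filterS (F := almost_everywhere mu)) => s H n st.
  have As0 := A_ge0 st.
  rewrite gee0_abs ?mule_ge0 ?tau_ge0// EFinM.
  apply: lee_pmul => //; first exact: tau_ge0.
    exact: H.
  exact: le_trans (tau_le_A _ st) (H st).
have [_ _] := @dominated_convergence _ _ _ mu _ mD fn (fun=> 0%E) _ mfn (measurable_cst _) ff ig fg.
by rewrite integral0.
Qed.


Lemma xpow_le x : 0 < x < 1 -> x * x `^ (- beta) <= wgt beta x.
Proof.
case: hK => b0 _ /andP[x0 x1].
apply: (@le_trans _ _ (x `^ (- (2 * beta)))); last by rewrite /wgt lerDl ltW.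
have lx : ln x < 0 by apply: ln_lt0; rewrite x0 x1.
rewrite /powR gt_eqF// -{1}(lnK (x0 : x \in Num.pos)) -expRD ler_expR.
nra.
Qed.

Lemma ineq_i x y q : 1 < q -> 0 < x < q -> x != 1 -> q < y ->
  x * Psi x y <= 2 * k * wgt beta x * wgt beta y.
Proof.
case: hK => b0 [k0 [_ [P0 [_ [_ [H2 H3]]]]]] q1 /andP[x0 xq] xn1 qy.
have y1 : 1 < y by rewrite (lt_trans q1).
have y0 : 0 < y by rewrite (lt_trans _ y1).
have wy := wgtx y0; have wx := wgtx x0.
have wx0 := wgt0 x0.
have Pxy := P0 _ _ x0 y0.
have [x1|x1|x1] := ltgtP x 1; last by rewrite x1 eqxx in xn1.
- have x01 : 0 < x < 1 by rewrite x0 x1.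
  have h1 := H2 _ _ x01 y1.
  have h2 := xpow_le _ x01.
  have p0 := powR_ge0 x (- beta).
  set p := x `^ (- beta) in h1 h2 p0.
  have e1 : x * Psi x y <= k * y * (x * p).
    have := ler_wpM2l (ltW x0) h1; lra.
  have e2 : k * y * (x * p) <= k * wgt beta y * wgt beta x.
    have ky : k * y <= k * wgt beta y by apply: ler_wpM2l => //; exact: ltW.
    apply: ler_pM => //; apply: mulr_ge0 => //; exact: ltW.
  have e3 : 0 <= k * wgt beta y * wgt beta x.
    by apply: mulr_ge0; [apply: mulr_ge0; [exact: ltW|exact: wgt0]|exact: wgt0].
  nra.
- have h1 := H3 _ _ x1 y1.
  have xy : x < y by rewrite (lt_trans xq).
  have e1 : x * Psi x y <= x * (k * (x + y)) by apply: ler_wpM2l => //; exact: ltW.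
  have kx : 0 < k * x by rewrite mulr_gt0.
  have e2 : x * (k * (x + y)) <= 2 * k * (x * y) by nra.
  have e3 : x * y <= wgt beta x * wgt beta y.
    by apply: ler_pM => //; exact: ltW.
  nra.
Qed.

Lemma ineq_ii x y q : 1 < q -> q < x -> q < y ->
  q * Psi x y <= 2 * k * wgt beta x * wgt beta y.
Proof.
case: hK => b0 [k0 [_ [P0 [_ [_ [H2 H3]]]]]] q1 qx qy.
have y1 : 1 < y by rewrite (lt_trans q1).
have x1 : 1 < x by rewrite (lt_trans q1).
have y0 : 0 < y by rewrite (lt_trans _ y1).
have x0 : 0 < x by rewrite (lt_trans _ x1).
have wy := wgtx y0; have wx := wgtx x0.
have h1 := H3 _ _ x1 y1.
have q0 : 0 < q by rewrite (lt_trans _ q1).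
have e1 : q * Psi x y <= q * (k * (x + y)) by apply: ler_wpM2l => //; exact: ltW.
have e2 : q * (x + y) <= 2 * (x * y) by nra.
have e2' : q * (k * (x + y)) <= 2 * k * (x * y).
  have := ler_wpM2l (ltW k0) e2; lra.
have e3 : x * y <= wgt beta x * wgt beta y.
  by apply: ler_pM => //; exact: ltW.
nra.
Qed.


Lemma bound_ii q s : 1 < q -> `[0, t]%classic s ->
  (\int[mu]_(x in `]q, +oo[%classic) \int[mu]_(y in `]q, +oo[%classic)
      (Psi x y * g x s * g y s)%:E <= (2 * k / q)%:E * (A s * tau q s))%E.
Proof.
move=> q1 st.
have q0 : 0 < q by rewrite (lt_trans _ q1).
have [b0 [k0 [_ [P0 _]]]] := hK.
set c := 2 * k / q.
have c0 : 0 <= c by rewrite /c divr_ge0 ?mulr_ge0 ?ltW.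
have mIq : measurable (`]q, +oo[%classic : set R) by exact: measurable_itv.
have pos x : `]q, +oo[%classic x -> 0 < x.
  by rewrite /= in_itv /= andbT => /(lt_trans q0).
have sub : `]q, +oo[%classic `<=` @Rpos R by move=> x /pos; rewrite Rpos_E.
have mwgq : measurable_fun `]q, +oo[%classic (fun x => (wgt beta x * g x s)%:E).
  by apply/measurable_EFinP; apply: measurable_funS (mwg st) => //; exact: mRpos.
have nn x : `]q, +oo[%classic x -> 0 <= wgt beta x * g x s.
  by move=> /pos x0; rewrite mulr_ge0 ?wgt0 ?g0.
apply: (@le_trans _ _ (\int[mu]_(x in `]q, +oo[%classic)
    ((c * (wgt beta x * g x s))%:E * tau q s))%E).
  apply: (@le_integral_nm _ _ _ mu `]q, +oo[%classic) => x xq.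
    have h : forall y, `]q, +oo[%classic y -> (0 <= (Psi x y * g x s * g y s)%:E)%E.
      by move=> y yq; rewrite lee_fin !mulr_ge0 ?P0 ?g0 ?pos.
    exact: (integral_ge0 mu h).
  rewrite -(tau_Ioo _ _ (ltW q0)) -ge0_integralZl_EFin //; last by rewrite mulr_ge0 ?nn.
  apply: (@le_integral_nm _ _ _ mu `]q, +oo[%classic) => y yq.
    by rewrite lee_fin !mulr_ge0 ?P0 ?g0 ?pos.
  rewrite -EFinM lee_fin.
  have x0 := pos _ xq; have y0 := pos _ yq.
  have hP : Psi x y <= c * (wgt beta x * wgt beta y).
    have xq' : q < x by move: xq; rewrite /= in_itv /= andbT.
    have yq' : q < y by move: yq; rewrite /= in_itv /= andbT.
    have H := ineq_ii x y q q1 xq' yq'.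
    rewrite -(ler_pM2l q0).
    have -> : q * (c * (wgt beta x * wgt beta y)) = 2 * k * wgt beta x * wgt beta y.
      by rewrite /c; field; rewrite gt_eqF.
    exact: H.
  have gg : 0 <= g x s * g y s by rewrite mulr_ge0 ?g0.
  have := ler_wpM2r gg hP.
  nra.
have mcw : measurable_fun `]q, +oo[%classic (fun x => (c * (wgt beta x * g x s))%:E).
  apply/measurable_EFinP; apply: measurable_funM => //.
  exact/measurable_EFinP.
have ncw : forall x, `]q, +oo[%classic x -> (0 <= (c * (wgt beta x * g x s))%:E)%E.
  by move=> x xq; rewrite lee_fin mulr_ge0 ?nn.
rewrite (ge0_integralZr mu mIq mcw ncw (tau_ge0 q st)).
under eq_integral => x _ do rewrite EFinM.
have nwg : forall x, `]q, +oo[%classic x -> (0 <= (wgt beta x * g x s)%:E)%E.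
  by move=> x /nn; rewrite lee_fin.
rewrite (ge0_integralZl_EFin mu mIq nwg mwgq c0) (tau_Ioo _ _ (ltW q0)).
rewrite -muleA; apply: lee_wpmul2l; first by rewrite lee_fin.
apply: lee_wpmul2r; first exact: tau_ge0.
exact: tau_le_A.
Qed.


Lemma bound_i q s : 1 < q -> `[0, t]%classic s ->
  (\int[mu]_(x in `]0%R, q[%classic) \int[mu]_(y in `]q, +oo[%classic)
      (x * Psi x y * g x s * g y s)%:E <= (2 * k)%:E * (A s * tau q s))%E.
Proof.
move=> q1 st.
have q0 : 0 < q by rewrite (lt_trans _ q1).
have [b0 [k0 [_ [P0 _]]]] := hK.
set c := 2 * k.
have c0 : 0 <= c by rewrite /c mulr_ge0 ?ltW.
have mIq : measurable (`]q, +oo[%classic : set R) by exact: measurable_itv.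
have mI0q : measurable (`]0%R, q[%classic : set R) by exact: measurable_itv.
have pos x : `]q, +oo[%classic x -> 0 < x.
  by rewrite /= in_itv /= andbT => /(lt_trans q0).
have pos0 x : `]0%R, q[%classic x -> 0 < x < q by rewrite /= in_itv /=.
have sub : `]q, +oo[%classic `<=` @Rpos R by move=> x /pos; rewrite Rpos_E.
have sub0 : `]0%R, q[%classic `<=` @Rpos R.
  by move=> x /pos0 /andP[x0 _]; rewrite Rpos_E.
have mwgq : measurable_fun `]q, +oo[%classic (fun x => (wgt beta x * g x s)%:E).
  by apply/measurable_EFinP; apply: measurable_funS (mwg st) => //; exact: mRpos.
have mwgp : measurable_fun (@Rpos R) (fun x => (wgt beta x * g x s)%:E).
  by apply/measurable_EFinP; exact: mwg.
have nwgp x : @Rpos R x -> (0 <= (wgt beta x * g x s)%:E)%E.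
  by rewrite Rpos_E => x0; rewrite lee_fin mulr_ge0 ?wgt0 ?g0.
have nwg x : `]q, +oo[%classic x -> (0 <= (wgt beta x * g x s)%:E)%E.
  by move=> /sub; exact: nwgp.
pose B x := ((c * (wgt beta x * g x s))%:E * tau q s)%E.
have mcw : measurable_fun `]0%R, q[%classic (fun x => (c * (wgt beta x * g x s))%:E).
  apply/measurable_EFinP; apply: measurable_funM => //.
  by apply: measurable_funS (mwg st) => //; exact: mRpos.
have ncw x : `]0%R, q[%classic x -> (0 <= (c * (wgt beta x * g x s))%:E)%E.
  by move=> /sub0; rewrite Rpos_E => x0; rewrite lee_fin mulr_ge0 // mulr_ge0 ?wgt0 ?g0.
have mB : measurable_fun `]0%R, q[%classic B.
  by apply: emeasurable_funM => //; exact: measurable_cst.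
apply: (@le_trans _ _ (\int[mu]_(x in `]0%R, q[%classic)
    (if x == 1%R then +oo else B x))%E).
  apply: (@le_integral_nm _ _ _ mu `]0%R, q[%classic) => x xq.
    have h : forall y, `]q, +oo[%classic y -> (0 <= (x * Psi x y * g x s * g y s)%:E)%E.
      have /andP[x0 _] := pos0 _ xq.
      move=> y yq; have y0 := pos _ yq; rewrite lee_fin.
      by apply: mulr_ge0; [apply: mulr_ge0; [apply: mulr_ge0; [exact: ltW|exact: P0]|exact: g0]|exact: g0].
    exact: (integral_ge0 mu h).
  case: eqP => [_|/eqP xn1]; first exact: leey.
  have /andP[x0 xq'] := pos0 _ xq.
  have c'0 : 0 <= c * (wgt beta x * g x s) by rewrite mulr_ge0 // mulr_ge0 ?wgt0 ?g0.
  rewrite /B -(tau_Ioo _ _ (ltW q0)) -(ge0_integralZl_EFin mu mIq nwg mwgq c'0).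
  apply: (@le_integral_nm _ _ _ mu `]q, +oo[%classic) => y yq.
    have y0 := pos _ yq; rewrite lee_fin.
    by apply: mulr_ge0; [apply: mulr_ge0; [apply: mulr_ge0; [exact: ltW|exact: P0]|exact: g0]|exact: g0].
  rewrite -EFinM lee_fin.
  have y0 := pos _ yq.
  have qy : q < y by move: yq; rewrite /= in_itv /= andbT.
  have x0q : 0 < x < q by rewrite x0 xq'.
  have H := ineq_i x y q q1 x0q xn1 qy.
  have gg : 0 <= g x s * g y s by rewrite mulr_ge0 ?g0.
  have := ler_wpM2r gg H.
  rewrite /c; nra.
have mif : measurable_fun `]0%R, q[%classic (fun x => if x == 1%R then +oo%E else B x).
  apply: measurable_fun_if => //.
  - apply: (@measurable_fun_eqr _ _ _ _ (fun x => x) (fun=> 1%R)).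
      exact: measurable_id.
    exact: measurable_cst.
  - by apply: measurable_funS mB => //; exact: subIsetl.
apply: (@le_trans _ _ (\int[mu]_(x in `]0%R, q[%classic) B x)%E).
  rewrite le_eqVlt; apply/orP; left; apply/eqP.
  apply: (@ae_eq_integral _ _ _ mu _ B _ mI0q mif mB).
  - move: (ae_neq 1%R); apply: (filterS (F := almost_everywhere mu)) => x xn1 _.
    by rewrite ifN.
rewrite /B (ge0_integralZr mu mI0q mcw ncw (tau_ge0 q st)).
under eq_integral => x _ do rewrite EFinM.
have nwg0 x : `]0%R, q[%classic x -> (0 <= (wgt beta x * g x s)%:E)%E.
  by move=> /sub0; exact: nwgp.
have mwg0 : measurable_fun `]0%R, q[%classic (fun x => (wgt beta x * g x s)%:E).
  by apply: measurable_funS mwgp => //; exact: mRpos.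
rewrite (ge0_integralZl_EFin mu mI0q nwg0 mwg0 c0).
rewrite -muleA; apply: lee_wpmul2l; first by rewrite lee_fin.
apply: lee_wpmul2r; first exact: tau_ge0.
exact: (ge0_subset_integral mu mI0q mRpos mwgp nwgp sub0).
Qed.


Lemma Iin_ge0 q s : 1 < q -> `[0, t]%classic s ->
  (0 <= \int[mu]_(x in `]0%R, q[%classic) \int[mu]_(y in `]q, +oo[%classic)
      (x * Psi x y * g x s * g y s)%:E)%E.
Proof.
move=> q1 st; have [b0 [k0 [_ [P0 _]]]] := hK.
have q0 : 0 < q by rewrite (lt_trans _ q1).
have h : forall x, `]0%R, q[%classic x -> (0 <= \int[mu]_(y in `]q, +oo[%classic)
      (x * Psi x y * g x s * g y s)%:E)%E.
  move=> x; rewrite /= in_itv /= => /andP[x0 _].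
  have h : forall y, `]q, +oo[%classic y -> (0 <= (x * Psi x y * g x s * g y s)%:E)%E.
    move=> y; rewrite /= in_itv /= andbT => qy; have y0 := lt_trans q0 qy.
    rewrite lee_fin.
    by apply: mulr_ge0; [apply: mulr_ge0; [apply: mulr_ge0; [exact: ltW|exact: P0]|exact: g0]|exact: g0].
  exact: (integral_ge0 mu h).
exact: (integral_ge0 mu h).
Qed.

Lemma Iiin_ge0 q s : 1 < q -> `[0, t]%classic s ->
  (0 <= \int[mu]_(x in `]q, +oo[%classic) \int[mu]_(y in `]q, +oo[%classic)
      (Psi x y * g x s * g y s)%:E)%E.
Proof.
move=> q1 st; have [b0 [k0 [_ [P0 _]]]] := hK.
have q0 : 0 < q by rewrite (lt_trans _ q1).
have h : forall x, `]q, +oo[%classic x -> (0 <= \int[mu]_(y in `]q, +oo[%classic)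
      (Psi x y * g x s * g y s)%:E)%E.
  move=> x; rewrite /= in_itv /= andbT => qx; have x0 := lt_trans q0 qx.
  have h : forall y, `]q, +oo[%classic y -> (0 <= (Psi x y * g x s * g y s)%:E)%E.
    move=> y; rewrite /= in_itv /= andbT => qy; have y0 := lt_trans q0 qy.
    rewrite lee_fin.
    by apply: mulr_ge0; [apply: mulr_ge0; [exact: P0|exact: g0]|exact: g0].
  exact: (integral_ge0 mu h).
exact: (integral_ge0 mu h).
Qed.

Lemma J_ge0 q : (0 <= J q)%E.
Proof.
have h : forall s, `[0, t]%classic s -> (0 <= A s * tau q s)%E.
  by move=> s st; rewrite mule_ge0 ?A_ge0 ?tau_ge0.
exact: (integral_ge0 mu h).
Qed.

Lemma main_i :
  (\int[mu]_(s in `[0%R, t]) \int[mu]_(x in `]0%R, q[)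
       \int[mu]_(y in `]q, +oo[) (x * Psi x y * g x s * g y s)%:E)%E
     @[q --> +oo] --> 0%E.
Proof.
have [b0 [k0 _]] := hK.
have mD : measurable (`[0%R, t]%classic : set R) by exact: measurable_itv.
apply: (@squeeze_cvge _ _ _ _ (fun=> 0%E) _ (fun q => (2 * k)%:E * J q)%E).
- near=> q.
  have q1 : 1 < q by near: q; apply: nbhs_pinfty_gt; exact: num_real.
  apply/andP; split.
    have h : forall s, `[0%R, t]%classic s -> (0 <= \int[mu]_(x in `]0%R, q[%classic)
       \int[mu]_(y in `]q, +oo[%classic) (x * Psi x y * g x s * g y s)%:E)%E.
      by move=> s st; exact: Iin_ge0.
    exact: (integral_ge0 mu h).
  apply: (@le_trans _ _ (\int[mu]_(s in `[0%R, t]%classic) ((2 * k)%:E * (A s * tau q s)))%E).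
    apply: (@le_integral_nm _ _ _ mu `[0%R, t]%classic) => s st.
      exact: Iin_ge0.
    exact: bound_i.
  have h : forall s, `[0%R, t]%classic s -> (0 <= A s * tau q s)%E.
    by move=> s st; rewrite mule_ge0 ?A_ge0 ?tau_ge0.
  have k2 : 0 <= 2 * k by rewrite mulr_ge0 ?ltW.
  by rewrite (@ge0_integralZl_EFin _ _ _ mu _ mD _ h (mAtau q) _ k2).
- exact: cvg_cst.
- have := cvgeZl (y := (2 * k)%:E) _ J_cvg; rewrite mule0; exact.
Unshelve. all: by end_near.
Qed.


Lemma main_ii :
  (q%:E * \int[mu]_(s in `[0%R, t]) \int[mu]_(x in `]q, +oo[)
       \int[mu]_(y in `]q, +oo[) (Psi x y * g x s * g y s)%:E)%E
     @[q --> +oo] --> 0%E.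
Proof.
have [b0 [k0 _]] := hK.
have mD : measurable (`[0%R, t]%classic : set R) by exact: measurable_itv.
apply: (@squeeze_cvge _ _ _ _ (fun=> 0%E) _ (fun q => (2 * k)%:E * J q)%E).
- near=> q.
  have q1 : 1 < q by near: q; apply: nbhs_pinfty_gt; exact: num_real.
  have q0 : 0 < q by rewrite (lt_trans _ q1).
  have Iq : (0 <= \int[mu]_(s in `[0%R, t]%classic) \int[mu]_(x in `]q, +oo[%classic)
       \int[mu]_(y in `]q, +oo[%classic) (Psi x y * g x s * g y s)%:E)%E.
    have h : forall s, `[0%R, t]%classic s -> (0 <= \int[mu]_(x in `]q, +oo[%classic)
       \int[mu]_(y in `]q, +oo[%classic) (Psi x y * g x s * g y s)%:E)%E.
      by move=> s st; exact: Iiin_ge0.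
    exact: (integral_ge0 mu h).
  apply/andP; split.
    by rewrite mule_ge0 // lee_fin ltW.
  apply: (@le_trans _ _ (q%:E * ((2 * k / q)%:E * J q)))%E.
    apply: lee_wpmul2l; first by rewrite lee_fin ltW.
    apply: (@le_trans _ _ (\int[mu]_(s in `[0%R, t]%classic) ((2 * k / q)%:E * (A s * tau q s)))%E).
      apply: (@le_integral_nm _ _ _ mu `[0%R, t]%classic) => s st.
        exact: Iiin_ge0.
      exact: bound_ii.
    have h : forall s, `[0%R, t]%classic s -> (0 <= A s * tau q s)%E.
      by move=> s st; rewrite mule_ge0 ?A_ge0 ?tau_ge0.
    have k2 : 0 <= 2 * k / q by rewrite divr_ge0 ?mulr_ge0 ?ltW.
    by rewrite (@ge0_integralZl_EFin _ _ _ mu _ mD _ h (mAtau q) _ k2).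
  rewrite muleA -EFinM.
  have -> : q * (2 * k / q) = 2 * k by field; rewrite gt_eqF.
  by [].
- exact: cvg_cst.
- have := cvgeZl (y := (2 * k)%:E) _ J_cvg; rewrite mule0; exact.
Unshelve. all: by end_near.
Qed.

End S.

Theorem lemma3p3 (R : realType) (Psi : R -> R -> R) (beta k : R)
  (T : \bar R) (gin : R -> R) (g : R -> R -> R) (t : R) :
  kernel_hyp Psi beta k ->
  (0 < T)%E ->
  (forall x, 0 < x -> 0 <= gin x) -> L1w beta gin ->
  weak_solution Psi beta T gin g ->
  0 < t -> (t%:E < T)%E ->
  ((\int[lebesgue_measure]_(s in `[0%R, t]) \int[lebesgue_measure]_(x in `]0%R, q[)
       \int[lebesgue_measure]_(y in `]q, +oo[) (x * Psi x y * g x s * g y s)%:E)%E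
     @[q --> +oo] --> 0%E) /\
  ((q%:E * \int[lebesgue_measure]_(s in `[0%R, t]) \int[lebesgue_measure]_(x in `]q, +oo[)
       \int[lebesgue_measure]_(y in `]q, +oo[) (Psi x y * g x s * g y s)%:E)%E
     @[q --> +oo] --> 0%E).
Proof.
move=> hK _ _ _ hW t0 tT; split.
- exact: (main_i _ _ _ _ _ _ _ _ hK hW t0 tT).
- exact: (main_ii _ _ _ _ _ _ _ _ hK hW t0 tT).
Qed.
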